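(* In the transactional panorama model with the lenses and metrics described in the context, for any $k\ge 0$: $S(k\text{-LCMB}) \le S(k\text{-LCNB}) \le S(k\text{-GCNB})$ and $I(k\text{-LCMB}) \ge I(k\text{-LCNB}) \ge I(k\text{-GCNB})$.
   Context: A view graph is a DAG on a set $N$ of nodes (source data and views). Write transactions are processed one at a time; write transaction $w^{t_i}$ creates version $G^{t_i}$ with state set $V^{t_i}$ containing, for each node $n_k$, either its computed new result $v_k^{t_i}$, a placeholder $UC_k^{t_i}$ if $w^{t_i}$ updates $n_k$ but has not yet computed it, or its result from the previous version if $n_k$ is not updated. A version is committed once all its new results are computed; at any time there is the committed graph (most recently committed version, no UCs) and the latest graph (version of the most recent write transaction). Read transactions $r^{s_1},\dots,r^{s_m}$ each read the views in the current viewport and return immediately a set $H^{s_i}$ of states (results or UCs); $Time(r^{s_i})$ is its return time. A returned state's timestamp is that of its version. Lenses: $k$-GCNB reads the latest graph if it has at most $k$ UCs in total, otherwise the committed graph. $k$-LCNB reads the more recent of the committed and latest graphs having at most $k$ UCs for the viewport. $k$-LCMB: if reading either the committed or the latest graph preserves monotonicity (no view gets a state with smaller timestamp than previously read), behave like $k$-LCNB; otherwise read the latest graph. Metrics for $R=\{r^{s_1},\dots,r^{s_m}\}$: invisibility $I(R)=\sum_{i=1}^{m-1}|H^{s_i}_{UC}|\,(Time(r^{s_{i+1}})-Time(r^{s_i}))$ where $H^{s_i}_{UC}$ is the set of UCs in $H^{s_i}$; staleness $S(R)=\sum_{i=1}^{m-1}\sum_{v_k^{t_j}\in H^{s_i}_{qr}}\mathbf{1}[v_k^{t_j}\notin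 V^{t_i}]\,(Time(r^{s_{i+1}})-Time(r^{s_i}))$ where $H^{s_i}_{qr}$ is the set of view results in $H^{s_i}$ and $G^{t_i}$ is the latest version before $r^{s_i}$ starts. $S(A)$, $I(A)$ denote these metrics under lens $A$; lenses are compared on the same write transactions, the same order of computing new view results, and the same sequence of read transactions. *)

(* Defs.v *)
From mathcomp Require Import all_boot all_order all_algebra.
Set Implicit Arguments. Unset Strict Implicit. Unset Printing Implicit Defensive.
Import Order.TTheory GRing.Theory Num.Theory.

(* A scenario: nodes of type N (source data and views), times in R.
   - Write transactions are numbered 1..nw (version 0 = initial graph);
     write i arrives at time wtime i and updates the nodes in upd i;
     the new result of node x in version i is computed at time ctime i x
     (only meaningful for x \in upd i).  This fixes the order of computing
     new view results.
   - Read transactions are numbered 0..nr-1; read n starts (and returns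
     immediately) at time rtime n and reads the current viewport
     viewport n. *)
Record scenario (N : finType) (R : realFieldType) := Scenario {
  nw : nat;
  wtime : nat -> R;
  upd : nat -> {set N};
  ctime : nat -> N -> R;
  nr : nat;
  rtime : nat -> R;
  viewport : nat -> {set N}
}.

Section Model.
Variables (N : finType) (R : realFieldType) (sc : scenario N R).
Local Open Scope ring_scope.

(* In version i the state of node x is the one produced by the most recent
   write j <= i updating x (j = 0: initial, always computed); its timestamp
   is j.  It is the result v_x^{t_j} if already computed, else UC_x^{t_j}. *)
Definition lastupd (i : nat) (x : N) : nat :=
  \max_(1 <= j < i.+1 | x \in upd sc j) j.

Definition computed (tau : R) (j : nat) (x : N) : bool :=
  (j == 0)%N || (ctime sc j x < tau).

Definition is_UC (tau : R) (i : nat) (x : N) : bool :=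
  ~~ computed tau (lastupd i x) x.

Definition numUC (tau : R) (i : nat) (A : {set N}) : nat :=
  #|[set x in A | is_UC tau i x]|.

Definition latest (tau : R) : nat :=
  \max_(1 <= i < (nw sc).+1 | wtime sc i < tau) i.

Definition committed (tau : R) : nat :=
  \max_(0 <= i < (latest tau).+1 | numUC tau i setT == 0%N) i.

(* the state of x read from version i at time tau is a result
   v_x^{t_j} (j = lastupd i x) that does not belong to the state set of
   the latest version *)
Definition stale_result (tau : R) (i : nat) (x : N) : bool :=
  computed tau (lastupd i x) x && (lastupd (latest tau) x != lastupd i x).

(* A lens is given by the version it reads at each read transaction n. *)
Definition gcnb (k : nat) (n : nat) : nat :=
  let tau := rtime sc n in
  if (numUC tau (latest tau) setT <= k)%N then latest tau else committed tau.

Definition lcnb (k : nat) (n : nat) : nat :=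
  let tau := rtime sc n in
  if (numUC tau (latest tau) (viewport sc n) <= k)%N then latest tau
  else committed tau.

Definition mono_ok (h : seq nat) (n : nat) (v : nat) : bool :=
  [forall x, (x \in viewport sc n) ==>
     all (fun p => (x \notin viewport sc p) ||
                   (lastupd (nth 0%N h p) x <= lastupd v x)%N)
         (iota 0 (size h))].

(* versions read by k-LCMB at reads 0..n-1 *)
Fixpoint lcmb_hist (k : nat) (n : nat) : seq nat :=
  match n with
  | 0 => [::]
  | n'.+1 =>
      let h := lcmb_hist k n' in
      let tau := rtime sc n' in
      rcons h (if mono_ok h n' (committed tau) && mono_ok h n' (latest tau)
               then lcnb k n' else latest tau)
  end.

Definition lcmb (k : nat) (n : nat) : nat := nth 0%N (lcmb_hist k n.+1) n.

Definition invisibility (lens : nat -> nat) : R :=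
  \sum_(i < (nr sc).-1)
     (numUC (rtime sc i) (lens i) (viewport sc i))%:R
       * (rtime sc i.+1 - rtime sc i).

Definition staleness (lens : nat -> nat) : R :=
  \sum_(i < (nr sc).-1)
     (#|[set x in viewport sc i | stale_result (rtime sc i) (lens i) x]|)%:R
       * (rtime sc i.+1 - rtime sc i).

End Model.

(* Main.v *)
Require Import Defs.
From mathcomp Require Import all_boot all_order all_algebra.
Import Order.TTheory GRing.Theory Num.Theory.
Local Open Scope ring_scope.

Section H.
Variables (N : finType) (R : realFieldType) (sc : scenario N R).

Lemma numUC_sub tau v (A : {set N}) : (numUC sc tau v A <= numUC sc tau v setT)%N.
Proof.
rewrite /numUC; apply: subset_leq_card; apply/subsetP=> x.
by rewrite !inE => /andP[_ ->].
Qed.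

Lemma numUC0 tau : numUC sc tau 0 setT = 0%N.
Proof.
rewrite /numUC; apply/eqP; rewrite cards_eq0; apply/eqP/setP=> x.
by rewrite !inE /is_UC /lastupd big_geq.
Qed.

Lemma numUC_committed tau A : numUC sc tau (committed sc tau) A = 0%N.
Proof.
apply/eqP; rewrite -leqn0; apply: leq_trans (numUC_sub _ _ _) _.
rewrite leqn0 /committed.
apply: (big_ind (fun v => numUC sc tau v setT == 0%N)).
- by rewrite numUC0.
- by move=> x y Hx Hy; rewrite /maxn; case: ifP.
- by [].
Qed.

Lemma stale_latest tau (A : {set N}) :
  #|[set x in A | stale_result sc tau (latest sc tau) x]| = 0%N.
Proof.
apply/eqP; rewrite cards_eq0; apply/eqP/setP=> x.
by rewrite !inE /stale_result eqxx andbF andbF.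
Qed.

Lemma size_hist k n : size (lcmb_hist sc k n) = n.
Proof. by elim: n => //= n IH; rewrite size_rcons IH. Qed.

Lemma lcmb_cases k n : lcmb sc k n = lcnb sc k n \/ lcmb sc k n = latest sc (rtime sc n).
Proof.
rewrite /lcmb /= nth_rcons size_hist ltnn eqxx.
by case: ifP => _; [left|right].
Qed.

Lemma term_le (a b : nat) (d : R) : (a <= b)%N -> 0 <= d -> a%:R * d <= b%:R * d.
Proof. by move=> h hd; apply: ler_wpM2r => //; rewrite ler_nat. Qed.

Lemma ord_bound (i : 'I_(nr sc).-1) : (i.+1 < nr sc)%N.
Proof. by case: i => i /= hi; move: hi; case: (nr sc) => //= m; rewrite ltnS. Qed.
End H.
Arguments numUC_sub {N R sc}.
Arguments ord_bound {N R sc}.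
Arguments term_le {R}.
Arguments lcmb_cases {N R}.

Theorem theorem2p12 (N : finType) (R : realFieldType) (sc : scenario N R)
  (k : nat)
  (hread : forall i : nat, (i.+1 < nr sc)%N -> rtime sc i <= rtime sc i.+1) :
  [/\ staleness sc (lcmb sc k) <= staleness sc (lcnb sc k),
      staleness sc (lcnb sc k) <= staleness sc (gcnb sc k),
      invisibility sc (lcnb sc k) <= invisibility sc (lcmb sc k)
    & invisibility sc (gcnb sc k) <= invisibility sc (lcnb sc k)].
Proof.
split; rewrite /staleness /invisibility; apply: ler_sum => -[n hn] _ /=;
  (apply: term_le; last by rewrite subr_ge0; apply: hread; exact: (ord_bound (Ordinal hn))).
- by case: (lcmb_cases sc k n) => ->; rewrite ?stale_latest.
- rewrite /lcnb /gcnb; case: ifP => h; first by rewrite stale_latest.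
  case: ifP => h2 //; exfalso.
  by move: h; rewrite (leq_trans (numUC_sub _ _ _) h2).
- case: (lcmb_cases sc k n) => -> //.
  rewrite /lcnb; case: ifP => _ //; by rewrite numUC_committed.
- rewrite /lcnb /gcnb; case: ifP => h; last by rewrite numUC_committed.
  by rewrite (leq_trans (numUC_sub _ _ _) h).
Qed.
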